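(* Let $n\ge 4$ and $t\in[n-1]$ be integers, and let $S$ be a weak $(2n-2t-1)$-resolving set of $K_n\times K_n$, with $\overline S=V\setminus S$. For all distinct $i,i'\in[n]$: if there is some $j\in[n]$ with $(i,j)\in\overline S$ and $(i',j)\in\overline S$, then $|(L_i\cup L_{i'})\cap\overline S|\le 2t+1$; otherwise $|(L_i\cup L_{i'})\cap\overline S|\le 2t+2$.
   Context: $K_n\times K_n$ is the direct product of two complete graphs on $n$ vertices: vertex set $V=[n]\times[n]$ with $[n]=\{1,\dots,n\}$, and $(i,j)$ adjacent to $(i',j')$ iff $i\ne i'$ and $j\ne j'$. For $i\in[n]$, $L_i=\{(i,j):j\in[n]\}$ is a vertical layer. For vertices $x,y,z$ and $S\subseteq V$, $\Delta_z(x,y)=|d(x,z)-d(y,z)|$ (with $d$ the graph distance) and $\Delta_S(x,y)=\sum_{z\in S}\Delta_z(x,y)$. A set $S$ is a weak $k$-resolving set if $\Delta_S(x,y)\ge k$ for all distinct $x,y\in V$. *)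

(* Defs.v *)
From mathcomp Require Import all_boot.
Set Implicit Arguments. Unset Strict Implicit. Unset Printing Implicit Defensive.

(* Vertices of K_n x K_n: [n] is represented by 'I_n = {0,...,n-1}. *)
Definition vtx (n : nat) : finType := ('I_n * 'I_n)%type.

Definition adj (n : nat) (x y : vtx n) : bool := (x.1 != y.1) && (x.2 != y.2).

Fixpoint walk (n : nat) (k : nat) (x y : vtx n) : bool :=
  match k with
  | 0 => x == y
  | k'.+1 => [exists z : vtx n, adj x z && walk k' z y]
  end.

(* Graph distance: least k with a walk of length k (shortest walks are paths,
   so k < |V| suffices); returns |V| if y is unreachable from x. *)
Definition dist (n : nat) (x y : vtx n) : nat :=
  find (fun k => walk k x y) (iota 0 #|vtx n|).

(* Delta_z(x,y) = |d(x,z) - d(y,z)| (absolute difference on nat). *)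
Definition Delta_z (n : nat) (z x y : vtx n) : nat :=
  (dist x z - dist y z) + (dist y z - dist x z).

Definition Delta_S (n : nat) (S : {set vtx n}) (x y : vtx n) : nat :=
  \sum_(z in S) Delta_z z x y.

Definition weak_resolving (n k : nat) (S : {set vtx n}) : Prop :=
  forall x y : vtx n, x != y -> k <= Delta_S S x y.

Definition layer (n : nat) (i : 'I_n) : {set vtx n} := [set x : vtx n | x.1 == i].

(* Main.v *)
Require Import Defs.
From mathcomp Require Import all_boot.
From mathcomp Require Import zify.

Lemma third_ord n (a b : 'I_n) : 3 <= n -> exists c : 'I_n, (c != a) && (c != b).
Proof.
move=> hn.
have : 0 < #|~: [set a; b]|.
  rewrite cardsCs setCK cards2 card_ord; case: (a != b) => /=; lia.
case/card_gt0P => c; rewrite !inE negb_or => h; by exists c.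
Qed.

Lemma dist_val n (x y : vtx n) : 3 <= n ->
  dist x y = if x == y then 0 else if adj x y then 1 else 2.
Proof.
move=> hn.
have [N HN] : exists N, #|vtx n| = N.+3.
  exists (n * n - 3); rewrite /vtx card_prod card_ord; nia.
rewrite /dist HN /=.
have w1 : walk 1 x y = adj x y.
  apply/existsP/idP => [[z /andP[a /eqP <-]] //| a].
  by exists y; rewrite a eqxx.
case: (x =P y) => // ne.
rewrite -/(walk 1 x y) w1; case: (boolP (adj x y)) => // na.
have w2 : walk 2 x y.
  have [c1 /andP[c1a c1b]] := @third_ord n x.1 y.1 hn.
  have [c2 /andP[c2a c2b]] := @third_ord n x.2 y.2 hn.
  apply/existsP; exists (c1, c2); apply/andP; split.
    by rewrite /adj /= eq_sym c1a eq_sym c2a.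
  apply/existsP; exists y; by rewrite /adj /= c1b c2b eqxx.
by rewrite -/(walk 2 x y) w2.
Qed.

Lemma dz n (i i' j : 'I_n) (z : vtx n) : 3 <= n -> i != i' ->
  Delta_z z (i, j) (i', j) =
  (z.1 == i) + (z.1 == i') + (z == (i, j) :> vtx n) + (z == (i', j) :> vtx n).
Proof.
move=> hn hi.
rewrite /Delta_z !dist_val // /adj.
case: z => a b /=.
rewrite !xpair_eqE /= ![_ == a]eq_sym ![_ == b]eq_sym.
move: (hi); case: (eqVneq a i) => [<-|h1].
  by move=> /negbTE ->; case: (b == j).
by move=> _; case: (a == i'); case: (b == j).
Qed.

Lemma sum_ind (T : finType) (A : {set T}) (P : pred T) :
  \sum_(z in A) (P z : nat) = #|[set z in A | P z]|.
Proof.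
rewrite -sum1_card big_mkcond [RHS]big_mkcond /=; apply: eq_bigr => z _.
by rewrite inE; case: (z \in A); case: (P z).
Qed.

Lemma card_single (T : finType) (A : {set T}) (x : T) :
  #|[set z in A | z == x]| = (x \in A).
Proof.
case: (boolP (x \in A)) => h.
  have -> : [set z in A | z == x] = [set x].
    by apply/setP => z; rewrite !inE; case: (z =P x) => [->|]; rewrite ?h ?andbF.
  by rewrite cards1.
have -> : [set z in A | z == x] = set0.
  by apply/setP => z; rewrite !inE; case: (z =P x) => [->|]; rewrite ?(negbTE h) ?andbF.
by rewrite cards0.
Qed.

Lemma deltaS n (S : {set vtx n}) (i i' j : 'I_n) : 3 <= n -> i != i' ->
  Delta_S S (i, j) (i', j) =
  #|(layer i :|: layer i') :&: S| + ((i, j) \in S) + ((i', j) \in S).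
Proof.
move=> hn hi.
have hU : forall z : vtx n, (z.1 == i) + (z.1 == i') = (z \in layer i :|: layer i') :> nat.
  move=> z; rewrite !inE; case: (z.1 =P i) => [->|_]; last by [].
  by rewrite (negbTE hi).

rewrite /Delta_S.
under eq_bigr => z _ do rewrite dz // hU.
rewrite !big_split /=.
rewrite (@sum_ind _ S (fun z => z \in layer i :|: layer i')).
rewrite (@sum_ind _ S (fun z => z == (i, j) :> vtx n)).
rewrite (@sum_ind _ S (fun z => z == (i', j) :> vtx n)).
have -> : [set z in S | z \in layer i :|: layer i'] = (layer i :|: layer i') :&: S.
  by apply/setP => z; rewrite !inE andbC.
by rewrite !card_single.
Qed.

Lemma card_layer n (i : 'I_n) : #|layer i| = n.
Proof.
have -> : layer i = setX [set i] [set: 'I_n].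
  by apply/setP => z; rewrite !inE andbT.
by rewrite cardsX cards1 cardsT card_ord mul1n.
Qed.

Lemma card_U n (i i' : 'I_n) : i != i' -> #|layer i :|: layer i'| = 2 * n.
Proof.
move=> hi; rewrite cardsU !card_layer.
have -> : layer i :&: layer i' = set0.
  apply/setP => z; rewrite !inE; case: (z.1 =P i) => [->|//].
  by rewrite (negbTE hi).
rewrite cards0; lia.
Qed.

Lemma pneq n (i i' j : 'I_n) : i != i' -> (i, j) != (i', j) :> vtx n.
Proof. by move=> hi; rewrite xpair_eqE (negbTE hi). Qed.

Theorem mainTheorem10 (n t : nat) (S : {set vtx n}) :
  4 <= n -> 1 <= t <= n.-1 ->
  weak_resolving (2 * n - 2 * t - 1) S ->
  forall i i' : 'I_n, i != i' ->
    ((exists j : 'I_n, ((i, j) \in ~: S) /\ ((i', j) \in ~: S)) ->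
       #|(layer i :|: layer i') :&: ~: S| <= 2 * t + 1) /\
    (~ (exists j : 'I_n, ((i, j) \in ~: S) /\ ((i', j) \in ~: S)) ->
       #|(layer i :|: layer i') :&: ~: S| <= 2 * t + 2).
Proof.
move=> hn /andP[t1 tn] hw i i' hi.
have hn3 : 3 <= n by lia.
have hU2 := @card_U n i i' hi.
have hID := cardsID S (layer i :|: layer i').
rewrite setDE hU2 in hID.
split.
  case=> j [hx hy].
  have := hw _ _ (@pneq n i i' j hi); rewrite deltaS //.
  move: hx hy; rewrite !inE => /negbTE -> /negbTE ->.
  lia.
move=> _.
case: (set_0Vmem ((layer i :|: layer i') :&: ~: S)) => [->|[[a b] hz]].
  by rewrite cards0.
have := hw _ _ (@pneq n i i' b hi); rewrite deltaS //.
have hle : ((i, b) \in S) + ((i', b) \in S) <= 1.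
  move: hz; rewrite !inE /= => /andP[/orP[/eqP ea|/eqP ea] hS]; subst a;
    rewrite (negbTE hS) /=; [by rewrite add0n; case: (_ \in S) | by rewrite addn0; case: (_ \in S)].
move: hle; move: ((i, b) \in S) ((i', b) \in S) => p q; move: (nat_of_bool p) (nat_of_bool q) => p' q'; move: hID; move: #|_ :&: S| #|_ :&: ~: S| => A B; lia.
Qed.
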